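(* Let $A\subset\mathbf{Z}$ be a finite set with $0\in A$, $N=\#A\geq 2$, all elements non-negative, and $A(x)=\sum_{a\in A}x^a$. (i) If $A(x)$ satisfies conditions (T1) and (T2), then $A(x)$ has a spectrum. (ii) If $A(x)$ has a spectrum $\{\theta_1,\dots,\theta_{N-1}\}\subset p^{-\alpha}\mathbf{Z}$, where $p$ is a prime and $\alpha\in\mathbf{N}$, then $N$ is a power of $p$ and (T1) holds.
   Context: For $s\geq 1$, $\Phi_s(x)$ denotes the $s$-th cyclotomic polynomial, $\Phi_s(x)=\prod(x-\epsilon)$ over the primitive $s$-th roots of unity $\epsilon$. $S_A$ is the set of prime powers $s$ (i.e. $s=p^\beta$ with $p$ prime, $\beta\geq1$) such that $\Phi_s(x)$ divides $A(x)$. Condition (T1): $A(1)=\prod_{s\in S_A}\Phi_s(1)$. Condition (T2): if $s_1,\dots,s_k\in S_A$ are powers of pairwise distinct primes, then $\Phi_{s_1s_2\cdots s_k}(x)$ divides $A(x)$. A set $\{\theta_1,\dots,\theta_{N-1}\}\subset(0,1)$ is called a spectrum for $A(x)$ if the $\theta_j$ are pairwise distinct and, with $\theta_0=0$, $A(e^{2\pi i(\theta_i-\theta_j)})=0$ for all $0\leq i,j\leq N-1$ with $i\neq j$. *)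

(* Defs.v *)
From HB Require Import structures.
From mathcomp Require Import all_boot all_order all_algebra all_field.
From mathcomp Require Import complex.
From mathcomp Require Import reals trigo.
Set Implicit Arguments. Unset Strict Implicit. Unset Printing Implicit Defensive.
Import Order.TTheory GRing.Theory Num.Theory.
Local Open Scope ring_scope.

(* A finite set A of non-negative integers is represented by a duplicate-free
   list of natural numbers. *)

Definition Apoly (A : seq nat) : {poly int} := \sum_(a <- A) 'X^a.

Definition prime_power (s : nat) : Prop :=
  exists p beta : nat, [/\ prime p, (0 < beta)%N & s = (p ^ beta)%N].

Definition in_SA (A : seq nat) (s : nat) : Prop :=
  prime_power s /\ ('Phi_s %| Apoly A)%R.

(* (T1): A(1) = prod_{s in S_A} Phi_s(1)  (S_A is finite; we enumerate it
   by a duplicate-free list S) *)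
Definition T1 (A : seq nat) : Prop :=
  exists S : seq nat, [/\ uniq S, (forall s, s \in S <-> in_SA A s) &
     (Apoly A).[1] = \prod_(s <- S) ('Phi_s).[1]].

Definition T2 (A : seq nat) : Prop :=
  forall pb : seq (nat * nat),
    pb != [::] -> uniq (map fst pb) ->
    (forall x, x \in pb -> [/\ prime x.1, (0 < x.2)%N & in_SA A (x.1 ^ x.2)%N]) ->
    ('Phi_(\prod_(x <- pb) (x.1 ^ x.2)%N) %| Apoly A)%R.

Definition expi (R : realType) (t : R) : R[i] :=
  (cos (2 * pi * t) +i* sin (2 * pi * t))%C.

Definition Aeval (R : realType) (A : seq nat) (z : R[i]) : R[i] :=
  \sum_(a <- A) z ^+ a.

Definition is_spectrum (R : realType) (A : seq nat) (th : seq R) : Prop :=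
  [/\ size th = (size A).-1, uniq th,
      (forall t, t \in th -> 0 < t < 1) &
      (forall i j : nat, (i < size A)%N -> (j < size A)%N -> i != j ->
        Aeval A (expi (nth 0 (0 :: th) i - nth 0 (0 :: th) j)) = 0)].

Definition has_spectrum (R : realType) (A : seq nat) : Prop :=
  exists th : seq R, is_spectrum A th.

(* Main.v *)
Require Import Defs.
From HB Require Import structures.
From mathcomp Require Import all_boot all_order all_algebra all_field.
From mathcomp Require Import complex.
From mathcomp Require Import reals trigo.
From mathcomp Require Import ring lra zify.
Set Implicit Arguments. Unset Strict Implicit. Unset Printing Implicit Defensive.
Import Order.TTheory GRing.Theory Num.Theory.

Section NatPart1.
Local Open Scope nat_scope.

Lemma digit_neq p d a b : 0 < p -> a = b %[mod d] -> a != b %[mod p * d] ->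
  (a %/ d) %% p != (b %/ d) %% p.
Proof.
move=> p0 hd; apply: contra => /eqP h.
rewrite !modn_divl in h.
have hx : (a %% (p * d)) %% d = (b %% (p * d)) %% d.
  by rewrite !modn_dvdm ?dvdn_mull.
by apply/eqP; rewrite (divn_eq (a %% (p * d)) d) (divn_eq (b %% (p * d)) d) h hx.
Qed.

Lemma modD_dvd d Q a b : (d %| Q) -> (a + Q == b %[mod d]) = (a == b %[mod d]).
Proof. by move=> dQ; rewrite -modnDmr (eqP dQ) addn0. Qed.

Lemma digits_core p al a b : prime p -> a < p ^ al -> b < p ^ al -> a != b ->
  exists v, [/\ v < al, p ^ al %/ gcdn (a + p ^ al - b) (p ^ al) = p ^ (al - v) &
    (a %/ p ^ v) %% p != (b %/ p ^ v) %% p].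
Proof.
move=> pp ha hb ab; set Q := p ^ al; set k := a + Q - b.
have p1 := prime_gt1 pp; have p0 := prime_gt0 pp.
have Q0 : 0 < Q by rewrite expn_gt0 p0.
have /(dvdn_pfactor _ _ pp) [v vle gE] : gcdn k Q %| Q by apply: dvdn_gcdr.
have hk : p ^ v %| k by rewrite -gE dvdn_gcdl.
have vlt : v < al.
  rewrite ltn_neqAle vle andbT; apply/eqP => ve.
  move: hk; rewrite ve -/Q => /dvdnP [c hc].
  have : c * Q != Q by rewrite -hc /k; lia.
  have : 0 < c * Q by rewrite -hc /k; lia.
  have : c * Q < 2 * Q by rewrite -hc /k; lia.
  by case: c {hc} => [|[|c]] //; rewrite ?mul1n ?eqxx //; nia.
exists v; split => //.
  by rewrite gE /Q expnB // ltnW.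
have pvQ : p ^ v %| Q by rewrite dvdn_Pexp2l // ltnW.
have pv1Q : p ^ v.+1 %| Q by rewrite dvdn_Pexp2l.
apply: digit_neq => //.
  apply/eqP; rewrite -(modD_dvd _ _ pvQ) eqn_mod_dvd; last by lia.
  by [].
rewrite -expnS -(modD_dvd _ _ pv1Q) eqn_mod_dvd; last by lia.
apply/negP => h.
have : p ^ v.+1 %| gcdn k Q by rewrite dvdn_gcd h.
by rewrite gE dvdn_Pexp2l // ltnn.
Qed.

End NatPart1.


Section Cenum.
Variable q : nat -> nat.
Hypothesis q0 : forall s, 0 < q s.

Fixpoint Cen (L : seq nat) : seq (seq nat) :=
  if L is s :: L' then [seq c :: u | c <- iota 0 (q s), u <- Cen L'] else [:: [::]].

Lemma size_Cen L : size (Cen L) = \prod_(s <- L) q s.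
Proof.
elim: L => [|s L IH] /=; first by rewrite big_nil.
by rewrite size_allpairs size_iota IH big_cons.
Qed.

Lemma uniq_Cen L : uniq (Cen L).
Proof.
elim: L => [|s L IH] //=.
rewrite allpairs_uniq ?iota_uniq //.
by move=> [a u] [b w] _ _ /= [-> ->].
Qed.

Lemma mem_Cen L v : v \in Cen L ->
  size v = size L /\ forall i, i < size L -> nth 0 v i < q (nth 0 L i).
Proof.
elim: L v => [|s L IH] v /=; first by rewrite inE => /eqP ->.
case/allpairsP => [[c u] /= [cI uC ->]].
have [su hu] := IH u uC; split; first by rewrite /= su.
case=> [|i] /=; first by rewrite mem_iota in cI; lia.
by rewrite ltnS; apply: hu.
Qed.

Lemma head_Cen L : Cen L = nseq (size L) 0 :: behead (Cen L).
Proof.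
elim: L => [|s L IH] //=.
have -> : iota 0 (q s) = 0 :: iota 1 (q s).-1.
  by case: (q s) (q0 s) => [|k] //.
by rewrite allpairs_cons IH /=.
Qed.
End Cenum.


Section RingPart1.
Local Open Scope ring_scope.
Section E2.
Variable R : realType.
Lemma expiD (x y : R) : expi (x + y) = expi x * expi y.
Proof.
rewrite /expi mulrDr cosD sinD /=. congr (Complex _ _). by rewrite addrC.
Qed.
Lemma expi0 : expi (0:R) = 1.
Proof. by rewrite /expi mulr0 cos0 sin0. Qed.
Lemma expi_nat (n : nat) : expi (n%:R : R) = 1.
Proof.
rewrite /expi mulr_natr.
have -> : (2 * pi : R) = pi *+ 2 by rewrite mulr_natl.
have h : forall f : R -> R, periodic f (pi *+ 2) -> f ((pi *+ 2) *+ n) = f 0.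
  by move=> f hf; rewrite -[X in f X]add0r periodicn.
by rewrite (h _ (@cosD2pi R)) (h _ (@sinD2pi R)) cos0 sin0.
Qed.
Lemma expi1 : expi (1 : R) = 1.
Proof. exact: (expi_nat 1). Qed.
Lemma expiN (x : R) : expi (- x) = (expi x)^-1.
Proof.
apply: (@mulIf _ (expi x)).
  apply/eqP => h. have := expiD (-x) x. rewrite addNr expi0 h mulr0 => /eqP. by rewrite oner_eq0.
by rewrite -expiD addNr expi0 mulVf //; apply/eqP => h; have := expiD (-x) x; rewrite addNr expi0 h mulr0 => /eqP; rewrite oner_eq0.
Qed.
Lemma expi_int (m : int) : expi (m%:~R : R) = 1.
Proof.
case: m => n; first by rewrite -pmulrn expi_nat.
by rewrite NegzE mulrNz expiN -pmulrn expi_nat invr1.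
Qed.
Lemma expiMn (x : R) (n : nat) : expi (x *+ n) = expi x ^+ n.
Proof. elim: n => [|n IH]; first by rewrite mulr0n expi0. by rewrite mulrS expiD IH exprS. Qed.
Lemma expi_neq1 (t : R) : 0 < t < 1 -> expi t != 1.
Proof.
move=> /andP[t0 t1]; apply/negP => /eqP.
rewrite /expi => /eqP; rewrite eq_complex /= => /andP[/eqP hc /eqP hs].
set y := pi * t.
have ex : 2 * pi * t = y *+ 2 by rewrite /y mulr2n -mulrA mulrDl mul1r.
rewrite ex in hc hs.
have sy : 0 < sin y.
  apply: sin_gt0_pi; rewrite /y mulr_gt0 ?pi_gt0 //= -ltr_pdivlMl ?pi_gt0 //.
  by rewrite mulrC mulrV ?unitfE ?gt_eqF ?pi_gt0.
rewrite sin_mulr2n in hs.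
have cy : cos y = 0.
  move/eqP: hs; rewrite mulrn_eq0 /= mulf_eq0 (gt_eqF sy) orbF => /eqP //.
move: hc; rewrite cos_mulr2n cy expr0n /= mul0rn sub0r => /eqP; lra.
Qed.

Lemma expi_prim (M : nat) : (0 < M)%N -> M.-primitive_root (expi (M%:R^-1 : R)).
Proof.
move=> M0; apply/andP; split => //; apply/forallP => i.
rewrite unity_rootE -expiMn.
have -> : (M%:R^-1 : R) *+ i.+1 = i.+1%:R / M%:R by rewrite mulr_natl.
case: (eqVneq i.+1 M) => [->|ne].
  by rewrite mulfV ?pnatr_eq0 -?lt0n // expi1 !eqxx.
have h : expi (i.+1%:R / M%:R : R) != 1.
  apply: expi_neq1; rewrite mulr_gt0 ?invr_gt0 ?ltr0n //=.
  rewrite ltr_pdivrMr ?ltr0n // mul1r ltr_nat.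
  by rewrite ltn_neqAle ne ltn_ord.
by rewrite (negbTE h).
Qed.

Lemma expi_sum (I : Type) (r : seq I) (f : I -> R) :
  expi (\sum_(i <- r) f i) = \prod_(i <- r) expi (f i).
Proof.
elim: r => [|x r IH]; first by rewrite !big_nil expi0.
by rewrite !big_cons expiD IH.
Qed.
End E2.

Lemma prim_char (F : fieldType) (z : F) n : (0 < n)%N -> z ^+ n = 1 ->
  (forall p, prime p -> (p %| n)%N -> z ^+ (n %/ p) != 1) -> n.-primitive_root z.
Proof.
move=> n0 zn hp; have [m pm mn] := prim_order_exists n0 zn.
have m0 := prim_order_gt0 pm.
case: (eqVneq m n) => [<- //|ne].
have k1 : (1 < n %/ m)%N.
  rewrite ltn_divRL // mul1n ltn_neqAle ne dvdn_leq //.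
set p := pdiv (n %/ m).
have pp : prime p by apply: pdiv_prime.
have pk : (p %| n %/ m)%N by apply: pdiv_dvd.
have pn : (p %| n)%N by rewrite -(divnK mn) dvdn_mulr.
have : (m %| n %/ p)%N.
  rewrite -(divnK mn) -(divnK pk) mulnAC mulnK ?prime_gt0 //; exact: dvdn_mull.
by rewrite (prim_order_dvd pm) (negbTE (hp p pp pn)).
Qed.


Lemma Xn1_root (F : fieldType) d (z : F) : (0 < d)%N ->
  root (map_poly intr 'Phi_d) z -> z ^+ d = 1.
Proof.
move=> d0 r; have := prod_Cyclotomic d0.
rewrite (big_rem d) -?dvdn_divisors // => /(congr1 (map_poly (intr : int -> F))).
rewrite rmorphM rmorphB /= rmorph1 map_polyXn => /(congr1 (horner^~ z)).
rewrite hornerM (eqP r) mul0r !hornerE => /esym/eqP; rewrite subr_eq0 => /eqP //.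
Qed.

Lemma Phi_root (F : fieldType) n (z : F) : n.-primitive_root z ->
  root (map_poly intr 'Phi_n) z.
Proof.
move=> pz; have n0 := prim_order_gt0 pz.
have := prod_Cyclotomic n0 => /(congr1 (map_poly (intr : int -> F))).
rewrite rmorph_prod rmorphB /= rmorph1 map_polyXn => /(congr1 (horner^~ z)).
rewrite horner_prod !hornerE prim_expr_order // subrr => /esym/eqP.

rewrite eq_sym prodf_seq_eq0 => /hasP[d]; rewrite -dvdn_divisors // => dn /= r.
have d0 : (0 < d)%N by apply: dvdn_gt0 dn.
have zd := Xn1_root d0 r.
have : (n %| d)%N by rewrite (prim_order_dvd pz) zd.
move=> nd; have -> : n = d by apply/eqP; rewrite eqn_dvd nd dn.
exact: r.
Qed.

Lemma Phi_p_at1 p b : prime p -> ('Phi_(p ^ b.+1)).[1] = p%:R.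
Proof.
move=> pp; set m := (p ^ b)%N; have p0 := prime_gt0 pp.
have m0 : (0 < m)%N by rewrite expn_gt0 p0.
have n0 : (0 < p ^ b.+1)%N by rewrite expn_gt0 p0.
have E1 := prod_Cyclotomic n0.
rewrite (big_rem (p ^ b.+1)%N) -?dvdn_divisors // in E1.
have pe : perm_eq (rem (p ^ b.+1)%N%N (divisors (p ^ b.+1)%N)) (divisors m).
  apply: uniq_perm; [by rewrite rem_uniq ?divisors_uniq | exact: divisors_uniq |].
  move=> d; rewrite mem_rem_uniq ?divisors_uniq // inE -!dvdn_divisors //.
  apply/andP/idP => [[dn /(dvdn_pfactor _ _ pp)[k kb dk]]|].
    rewrite dk (dvdn_Pexp2l _ _ (prime_gt1 pp)); rewrite leq_eqVlt in kb.
    case/orP: kb => [/eqP kb|]; last by [].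
    by move: dn; rewrite dk kb eqxx.
  move=> dm; split; last by apply: dvdn_trans dm _; rewrite /m (dvdn_Pexp2l _ _ (prime_gt1 pp)).
  apply/negP => /eqP de; move: (dvdn_leq m0 dm); rewrite de /m leqNgt.
  by rewrite ltn_exp2l ?prime_gt1 // ltnSn.
rewrite (perm_big _ pe) /= prod_Cyclotomic // in E1.
have E2 : ('X^(p ^ b.+1)%N - 1 : {poly int}) = ('X^m - 1) * \sum_(i < p) ('X^m) ^+ i.
  by rewrite -subrX1 -exprM /m expnSr.
rewrite E2 mulrC in E1.
have nz : ('X^m - 1 : {poly int}) != 0.
  by rewrite -size_poly_eq0 size_XnsubC.
have := mulfI nz E1 => ->.
rewrite horner_sum.
under eq_bigr => i _ do rewrite -exprM hornerXn expr1n.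
by rewrite sumr_const card_ord.
Qed.


Local Notation ZtoQ := (intr : int -> rat).

Lemma dvdp_int_rat (d P : {poly int}) : d \is monic ->
  (map_poly ZtoQ d %| map_poly ZtoQ P) -> d %| P.
Proof.
move=> md hd; apply/modp_eq0P.
have d0 : d != 0 by apply: monic_neq0.
have E := Pdiv.IdomainMonic.divp_eq md P.
set r := P %% d in E *; set q := P %/ d in E.
have [//|r0] := eqVneq r 0; exfalso.
have hr : map_poly ZtoQ d %| map_poly ZtoQ r.
  have -> : map_poly ZtoQ r = map_poly ZtoQ P - map_poly ZtoQ q * map_poly ZtoQ d.
    by rewrite {1}E rmorphD rmorphM /= addrC addKr.
  by rewrite dvdp_sub // dvdp_mull.
have rQ0 : map_poly ZtoQ r != 0.
  by rewrite -size_poly_eq0 (size_map_inj_poly (@intr_inj _)) // size_poly_eq0.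
have := dvdp_leq rQ0 hr.
rewrite !(size_map_inj_poly (@intr_inj _)) //.
by rewrite leqNgt ltn_modp d0.
Qed.

Local Notation ZtoC := (intr : int -> algC).
Local Notation QtoC := (ratr : rat -> algC).

Lemma map_ZQ (F : numFieldType) (P : {poly int}) :
  map_poly (ratr : rat -> F) (map_poly ZtoQ P) = map_poly intr P.
Proof. by rewrite -map_poly_comp; apply: eq_map_poly => x /=; rewrite rmorph_int. Qed.

Lemma Phi_dvd (F : numFieldType) n (z : F) (P : {poly int}) :
  n.-primitive_root z -> root (map_poly intr P) z -> 'Phi_n %| P.
Proof.
move=> pz rP; apply: dvdp_int_rat; first exact: Cyclotomic_monic.
set PQ := map_poly ZtoQ P; set FQ := map_poly ZtoQ 'Phi_n.
have n0 := prim_order_gt0 pz.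
have nco : ~~ coprimep PQ FQ.
  apply/negP => co.
  have := coprimep_map (ratr : {rmorphism rat -> F}) PQ FQ.
  rewrite co !map_ZQ => co'.
  by have := coprimep_root co' rP; rewrite (eqP (Phi_root _)) ?eqxx.
set g := gcdp PQ FQ.
have [z' pz'] := C_prim_root_exists n0.
have gs : size (map_poly QtoC g) != 1 by rewrite size_map_poly.
have [w rw] := closed_rootP _ gs.
have FQC : map_poly QtoC FQ = cyclotomic z' n by rewrite map_ZQ (Cintr_Cyclotomic pz').
have pw : n.-primitive_root w.
  rewrite -(root_cyclotomic pz') -FQC.
  have /Pdiv.Field.dvdpP [qq ->] : g %| FQ by apply: dvdp_gcdr.
  by rewrite rmorphM rootM rw orbT.
have [pf [Hpf _] Hroot] := minCpolyP w.
have pfE : pf = FQ.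
  apply: (map_inj_poly (fmorph_inj (ratr : {rmorphism rat -> algC}))) => //.
    by rewrite rmorph0.
  by rewrite -Hpf (minCpoly_cyclotomic pw) FQC -(Cintr_Cyclotomic pw) -(Cintr_Cyclotomic pz').
apply: (dvdp_trans _ (dvdp_gcdl PQ FQ)).
by move: (Hroot g); rewrite rw pfE.
Qed.



Lemma dvdn_prod_seq (S : seq nat) s : s \in S -> (s %| \prod_(t <- S) t)%N.
Proof. by move=> sS; rewrite (big_rem s sS) /= dvdn_mulr. Qed.

Lemma prod_Phi_XL (L : nat) (S : seq nat) : (0 < L)%N -> uniq S ->
  (forall s, s \in S -> (s %| L)%N) -> \prod_(s <- S) 'Phi_s %| 'X^L - 1.
Proof.
move=> L0 uS hS; rewrite -prod_Cyclotomic //.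
have pe : perm_eq (divisors L) (S ++ [seq d <- divisors L | d \notin S]).
  apply: uniq_perm; first exact: divisors_uniq.
    rewrite cat_uniq uS filter_uniq ?divisors_uniq //= andbT.
    by apply/hasPn => d; rewrite mem_filter => /andP[].
  move=> d; rewrite mem_cat mem_filter -dvdn_divisors //.
  by case: (boolP (d \in S)) => dS /=; rewrite ?(hS _ dS).
by rewrite (perm_big _ pe) big_cat /= dvdp_mulr.
Qed.

Lemma mapZQ_dvd (d P : {poly int}) : d %| P -> d \is monic ->
  map_poly ZtoQ d %| map_poly ZtoQ P.
Proof.
move=> dP md; have /(Pdiv.IdomainMonic.dvdpP md) [q ->] := dP.
by rewrite rmorphM /= dvdp_mull.
Qed.

Lemma prod_Phi_dvd (S : seq nat) (P : {poly int}) : uniq S ->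
  (forall s, s \in S -> (0 < s)%N /\ 'Phi_s %| P) -> \prod_(s <- S) 'Phi_s %| P.
Proof.
move=> uS hS.
have mon : forall S', \prod_(s <- S') 'Phi_s \is monic.
  by move=> S'; apply: monic_prod => s _; apply: Cyclotomic_monic.
apply: dvdp_int_rat; first exact: mon.
set L := (\prod_(t <- S) t)%N.
have L0 : (0 < L)%N by rewrite /L big_seq_cond prodn_cond_gt0 // => s /andP[/hS []].
have sep : separable_poly (map_poly ZtoQ ('X^L - 1)).
  by rewrite rmorphB rmorph1 /= map_polyXn separable_Xn_sub_1 // pnatr_eq0 -lt0n.
have : forall S', uniq S' -> {subset S' <= S} ->
   map_poly ZtoQ (\prod_(s <- S') 'Phi_s) %| map_poly ZtoQ P.
  elim=> [|s S' IH]; first by rewrite big_nil rmorph1 dvd1p.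
  rewrite cons_uniq => /andP[sS' uS'] sub.
  have sS : s \in S by apply: sub; rewrite inE eqxx.
  have sub' : {subset S' <= S} by move=> x xS'; apply: sub; rewrite inE xS' orbT.
  rewrite big_cons rmorphM /= Gauss_dvdp.
    by rewrite IH // mapZQ_dvd ?Cyclotomic_monic //; case: (hS s sS).
  have : map_poly ZtoQ ('Phi_s * \prod_(j <- S') 'Phi_j) %| map_poly ZtoQ ('X^L - 1).
    apply: mapZQ_dvd; last by rewrite monicMl ?Cyclotomic_monic ?mon.
    have := @prod_Phi_XL L (s :: S') L0; rewrite big_cons; apply.
      by rewrite cons_uniq sS' uS'.
    by move=> x /sub xS; apply: dvdn_prod_seq.
  move/dvdp_separable => /(_ sep); rewrite rmorphM /= separable_mul.
  by case/and3P.
by apply.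
Qed.


Lemma Apoly_at1 (A : seq nat) : (Apoly A).[1] = (size A)%:R.
Proof.
rewrite /Apoly; elim: A => [|a A IH]; first by rewrite big_nil hornerC.
by rewrite big_cons hornerD IH hornerXn expr1n /= -add1n natrD.
Qed.

Lemma Apoly_neq0 (A : seq nat) : (0 < size A)%N -> Apoly A != 0.
Proof.
move=> h; apply/eqP => e; have := Apoly_at1 A; rewrite e hornerC => /eqP.
by rewrite eq_sym pnatr_eq0 => /eqP hh; move: h; rewrite hh.
Qed.

Lemma Aeval_map (R : realType) (A : seq nat) (z : R[i]) :
  Aeval A z = (map_poly intr (Apoly A)).[z].
Proof.
rewrite /Aeval /Apoly rmorph_sum horner_sum; apply: eq_bigr => a _.
by rewrite /= map_polyXn hornerXn.
Qed.

Definition ppb (s : nat) := (1 < s)%N && (s == pdiv s ^ logn (pdiv s) s)%N.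

Lemma ppP s : reflect (prime_power s) (ppb s).
Proof.
apply: (iffP andP) => [[s1 /eqP se]|[p [b [pp b0 ->]]]].
  exists (pdiv s), (logn (pdiv s) s); split => //; first exact: pdiv_prime.
  by rewrite logn_gt0 mem_primes pdiv_prime //= pdiv_dvd andbT ltnW.
have [b' ->] : exists b', b = b'.+1 by exists b.-1; rewrite prednK.
rewrite pdiv_pfactor // pfactorK //; split => //.
by rewrite -{1}(expn0 p) ltn_exp2l ?prime_gt1.
Qed.

Lemma pp_pdiv s : prime_power s ->
  [/\ prime (pdiv s), (0 < logn (pdiv s) s)%N & s = (pdiv s ^ logn (pdiv s) s)%N].
Proof.
case=> p [b [pp b0 ->]].
have [b' ->] : exists b', b = b'.+1 by exists b.-1; rewrite prednK.
by rewrite pdiv_pfactor // pfactorK.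
Qed.

Lemma Phi_pp_at1 s : prime_power s -> ('Phi_s).[1] = (pdiv s)%:R.
Proof.
move=> /pp_pdiv [pp l0 se]; rewrite {1}se.
have [b' ->] : exists b', logn (pdiv s) s = b'.+1 by exists (logn (pdiv s) s).-1; rewrite prednK.
exact: Phi_p_at1.
Qed.

Lemma prod_Phi_at1 (S : seq nat) : (forall s, s \in S -> prime_power s) ->
  \prod_(s <- S) ('Phi_s).[1] = (\prod_(s <- S) pdiv s)%:R.
Proof.
elim: S => [|s S IH] h; first by rewrite !big_nil.
rewrite !big_cons natrM IH ?Phi_pp_at1 //; first by apply: h; rewrite inE eqxx.
by move=> x xS; apply: h; rewrite inE xS orbT.
Qed.

Lemma SA_bound (A : seq nat) s : (0 < size A)%N -> in_SA A s ->
  (s < (size (Apoly A)).*2.+1)%N.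
Proof.
move=> A0 [pps dv].
have := dvdp_leq (Apoly_neq0 A0) dv; rewrite size_Cyclotomic.
have [pp l0 se] := pp_pdiv pps.
set p := pdiv s in pp l0 se *; set b := logn p s in l0 se *.
rewrite se totient_pfactor //.
have p2 := prime_gt1 pp.
have -> : (p ^ b = p * p ^ b.-1)%N by rewrite -expnS prednK.
set r := (p ^ b.-1)%N; move=> h.
have : (p * r <= 2 * (p.-1 * r))%N.
  rewrite mulnA leq_mul2r; apply/orP; right.
  have : (2 <= p)%N by []. clear. lia.
move=> h2; move: h h2; move: (p * r)%N (p.-1 * r)%N => X Y. rewrite -mul2n; move: (size (Apoly A)) => Z; lia.
Qed.

Lemma prod_sub_le (S L : seq nat) (f : nat -> nat) : uniq S -> uniq L ->
  {subset L <= S} -> (forall s, s \in S -> (0 < f s)%N) ->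
  (\prod_(s <- L) f s <= \prod_(s <- S) f s)%N.
Proof.
move=> uS uL sub f0.
have pe : perm_eq S (L ++ [seq s <- S | s \notin L]).
  apply: uniq_perm => //.
    rewrite cat_uniq uL filter_uniq //= andbT.
    by apply/hasPn => d; rewrite mem_filter => /andP[].
  move=> d; rewrite mem_cat mem_filter.
  by case: (boolP (d \in L)) => dL /=; rewrite ?(sub _ dL) ?andbT.
rewrite (perm_big _ pe) big_cat /= leq_pmulr //.
rewrite big_seq_cond prodn_cond_gt0 // => s /andP[].
by rewrite mem_filter => /andP[_ /f0].
Qed.

Lemma prod_const_seq (T : Type) (L : seq T) (c : nat) :
  (\prod_(s <- L) c = c ^ size L)%N.
Proof. by elim: L => [|x L IH]; rewrite ?big_nil ?big_cons ?IH ?expnS. Qed.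

End RingPart1.

Section NatPart2.
Local Open Scope nat_scope.

Lemma pp_same s t : prime_power s -> prime_power t -> pdiv s = pdiv t ->
  (s %| t) = (s <= t).
Proof.
move=> /pp_pdiv[ps ls se] /pp_pdiv[pt lt te] e.
rewrite se te e dvdn_Pexp2l ?prime_gt1 // leq_exp2l // prime_gt1 //.
Qed.

Lemma pp_lt s t : prime_power s -> prime_power t -> pdiv s = pdiv t -> s < t ->
  s %| t %/ pdiv t.
Proof.
move=> /pp_pdiv[ps ls se] /pp_pdiv[pt lt te] e.
rewrite {1}se {1 2}te e; set p := pdiv t; set b := logn _ s; set c := logn p t.
rewrite ltn_exp2l ?prime_gt1 -?e // => bc.
have -> : c = c.-1.+1 by lia.
rewrite expnS mulKn ?prime_gt0 // se e -/p -/b dvdn_Pexp2l ?prime_gt1 //; lia.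
Qed.

Lemma pp_dvd p t : prime_power t -> prime p -> p %| t -> pdiv t = p.
Proof.
move=> /pp_pdiv[pt lt te] pp; rewrite {1}te (Euclid_dvdX _ _ pp) => /andP[h _].
by apply/eqP; rewrite eq_sym -dvdn_prime2.
Qed.

Lemma pp_coprime t p : prime_power t -> prime p -> pdiv t != p -> coprime t p.
Proof.
move=> ppt pp ne; rewrite coprime_sym prime_coprime //.
by apply/negP => /(pp_dvd ppt pp) e; move: ne; rewrite e eqxx.
Qed.

Lemma nodiv p T0 a b : 0 < p -> p %| T0 -> 0 < T0 -> a < p -> b < p -> a != b ->
  ~~ (p %| a + T0 - b).
Proof.
move=> p0 /dvdnP[k ->] T00 ap bp ab; apply/negP => /dvdnP[m hm].
have k1 : 1 <= k by lia.
have kp : p <= k * p by rewrite leq_pmull.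
case: (leqP b a) => ba.
  have : m * p = (a - b) + k * p by lia.
  move=> e; have : (k <= m) by nia.
  move=> km; have : (m - k) * p = a - b by rewrite mulnBl; lia.
  case: (m - k) => [|j]; lia.
have : m * p + (b - a) = k * p by lia.
move=> e; have : m < k by rewrite -(ltn_pmul2r p0); lia.
move=> mk; have : (k - m) * p = b - a by rewrite mulnBl; lia.
case: (k - m) => [|j]; lia.
Qed.

End NatPart2.

Local Open Scope ring_scope.

Lemma keyL3 (R : realType) (A : seq nat) (S : seq nat) (cv cw : nat -> nat) :
  uniq S -> (forall s, s \in S -> in_SA A s) -> T2 A ->
  (forall s, s \in S -> (cv s < pdiv s)%N /\ (cw s < pdiv s)%N) ->
  (exists2 s, s \in S & cv s != cw s) ->
  exists n, [/\ (1 < n)%N, 'Phi_n %| Apoly A &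
    n.-primitive_root (\prod_(s <- S) expi (s%:R^-1 : R) ^+ (cv s + s - cw s))].
Proof.
move=> uS hS hT2 hc [s0 s0S d0].
have ppS : forall s, s \in S -> prime_power s by move=> s /hS[].
have S1 : forall s, s \in S -> (1 < s)%N by move=> s /ppS /ppP /andP[].
set diff := fun s => cv s != cw s.
set om := fun s : nat => expi (s%:R^-1 : R).
set d := fun s => (cv s + s - cw s)%N.
have pom : forall s, s \in S -> s.-primitive_root (om s).
  by move=> s sS; apply: expi_prim; apply: ltnW; apply: S1.
set top := fun t => [&& t \in S, diff t &
   all (fun u => (pdiv u == pdiv t) && diff u ==> (u <= t)%N) S].
have ex_top : forall s, s \in S -> diff s ->
    exists t, [/\ top t, pdiv t = pdiv s & (s <= t)%N].
  move=> s sS ds.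
  pose P := fun u => [&& u \in S, pdiv u == pdiv s & diff u].
  have exP : exists u, P u by exists s; rewrite /P sS eqxx ds.
  have ubP : forall u, P u -> (u <= \sum_(x <- S) x)%N.
    by move=> u /and3P[uS0 _ _]; rewrite (big_rem u uS0) leq_addr.
  case: (ex_maxnP exP ubP) => t /and3P[tS /eqP pt dt] mx.
  exists t; split => //; last by apply: mx; rewrite /P sS eqxx ds.
  rewrite /top tS dt /=; apply/allP => u uS0; apply/implyP => /andP[/eqP pu du].
  by apply: mx; rewrite /P uS0 pu pt eqxx du.
have top_uniq : forall t t', top t -> top t' -> pdiv t = pdiv t' -> t = t'.
  move=> t t' /and3P[tS dt /allP al1] /and3P[t'S dt' /allP al2] e.
  apply/eqP; rewrite eqn_leq.
  have := al2 t tS; rewrite e eqxx dt /= => ->.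
  by have := al1 t' t'S; rewrite e eqxx dt' /= => ->.
set Tops := [seq t <- S | top t].
have uT : uniq Tops by rewrite filter_uniq.
have TopsE : forall t, t \in Tops = top t.
  by move=> t; rewrite mem_filter andb_idr // => /and3P[].
set n := (\prod_(t <- Tops) t)%N.
have n0 : (0 < n)%N.
  by rewrite /n big_seq_cond prodn_cond_gt0 // => t /andP[]; rewrite TopsE => /and3P[/S1 /ltnW].
have tn : forall t, top t -> (t %| n)%N by move=> t tt; apply: dvdn_prod_seq; rewrite TopsE.
have [t0 [tt0 _ _]] := ex_top s0 s0S d0.
have t0S : t0 \in S by case/and3P: tt0.
have n1 : (1 < n)%N.
  by apply: (leq_trans (S1 t0 t0S)); apply: dvdn_leq => //; apply: tn.
have dvn : 'Phi_n %| Apoly A.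
  set pb := [seq (pdiv t, logn (pdiv t) t) | t <- Tops].
  have nE : n = (\prod_(x <- pb) (x.1 ^ x.2))%N.
    rewrite /pb big_map /n; apply: eq_big_seq => t; rewrite TopsE => /and3P[tS _ _].
    by have [_ _ <-] := pp_pdiv (ppS t tS).
  rewrite nE; apply: hT2.
  - apply/eqP => e.
    have : (pdiv t0, logn (pdiv t0) t0) \in pb by apply: map_f; rewrite TopsE.
    by rewrite e.
  - rewrite /pb -map_comp; rewrite map_inj_in_uniq //.
    by move=> t t'; rewrite !TopsE => tt tt' /= e; apply: top_uniq.
  - move=> x /mapP[t]; rewrite TopsE => /and3P[tS _ _] -> /=.
    have [pt lt te] := pp_pdiv (ppS t tS); split => //.
    by rewrite -te; apply: hS.
exists n; split => //.
set Z := \prod_(s <- S) _.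
have ZX : forall m, Z ^+ m = \prod_(s <- S) om s ^+ (d s * m).
  by move=> m; rewrite /Z -prodrXl; apply: eq_bigr => s _; rewrite exprM.
have dnd : forall s, ~~ diff s -> d s = s.
  by move=> s; rewrite /diff negbK => /eqP e; rewrite /d e; lia.
have fac1 : forall s m, s \in S -> (s %| d s * m)%N -> om s ^+ (d s * m) = 1.
  by move=> s m sS h; apply/eqP; rewrite -(prim_order_dvd (pom s sS)).
have cS : forall s, s \in S -> (s %| d s * n)%N.
  move=> s sS; case: (boolP (diff s)) => ds; last by rewrite dnd // dvdn_mulr.
  have [t [tt pt st]] := ex_top s sS ds.
  have tS : t \in S by case/and3P: tt.
  apply: dvdn_mull; apply: dvdn_trans (tn t tt).
  by rewrite (pp_same (ppS s sS) (ppS t tS)).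
apply: prim_char => //.
  by rewrite ZX; apply: big1_seq => s /andP[_ sS]; apply: fac1 => //; apply: cS.
move=> p pp pn.
have [tp tpT ptp] : exists2 tp, tp \in Tops & (p %| tp)%N.
  by move: pn; rewrite /n (Euclid_dvd_prod _ _ _ pp) big_has => /hasP[t tT h]; exists t.
have ttp : top tp by rewrite -TopsE.
have tpS : tp \in S by case/and3P: ttp.
have pdtp : pdiv tp = p := pp_dvd (ppS tp tpS) pp ptp.
set R0 := (\prod_(t <- Tops | t != tp) t)%N.
have nE : n = (tp * R0)%N by rewrite /n (bigD1_seq tp tpT uT).
have pR : ~~ (p %| R0)%N.
  rewrite /R0 (Euclid_dvd_prod _ _ _ pp) big_has_cond; apply/hasPn => t tT /=.
  apply/negP => /andP[tne pt].
  have tt : top t by rewrite -TopsE.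
  have tS : t \in S by case/and3P: tt.
  have := top_uniq t tp tt ttp; rewrite (pp_dvd (ppS t tS) pp pt) pdtp => /(_ erefl) e.
  by move: tne; rewrite e eqxx.
have p0 := prime_gt0 pp.
have [c ce] : exists c, tp = (p ^ c.+1)%N.
  have [_ l0 te] := pp_pdiv (ppS tp tpS).
  exists (logn (pdiv tp) tp).-1; rewrite prednK // -pdtp; exact: te.
have nP : (n %/ p = p ^ c * R0)%N by rewrite nE ce expnS -mulnA mulKn.
have tpp : (tp %/ p = p ^ c)%N by rewrite ce expnS mulKn.
rewrite ZX (bigD1_seq tp tpS uS) /= big1_seq ?mulr1.
  rewrite -(prim_order_dvd (pom tp tpS)) nP {1}ce expnSr mulnCA dvdn_pmul2l ?expn_gt0 ?p0 //.
  rewrite Euclid_dvdM // negb_or pR andbT.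
  have [cvt cwt] := hc tp tpS; rewrite pdtp in cvt cwt.
  apply: nodiv => //; first by rewrite ce expn_gt0 p0.
  by case/and3P: ttp.
move=> s /andP[sne sS]; apply: fac1 => //.
case: (boolP (diff s)) => ds; last by rewrite dnd // dvdn_mulr.
have [t [tt pt st]] := ex_top s sS ds.
have tS : t \in S by case/and3P: tt.
apply: dvdn_mull.
case: (eqVneq (pdiv s) p) => ps.
  have e : t = tp by apply: top_uniq => //; rewrite pt ps pdtp.
  have stp : (s < tp)%N by rewrite ltn_neqAle sne -e.
  have := pp_lt (ppS s sS) (ppS tp tpS); rewrite ps pdtp => /(_ erefl stp).
  by rewrite tpp nP => h; apply: dvdn_trans h (dvdn_mulr _ _).
have ctp : coprime t p by apply: (pp_coprime (ppS t tS) pp); rewrite pt.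
apply: dvdn_trans (_ : t %| _)%N.
  by rewrite (pp_same (ppS s sS) (ppS t tS)).
rewrite -(Gauss_dvdr _ ctp) mulnC divnK //; exact: tn.
Qed.


Lemma partII (R : realType) (A : seq nat) (p al : nat) (th : seq R) :
  uniq A -> (0 \in A)%N -> (2 <= size A)%N ->
  prime p -> is_spectrum A th ->
  (forall t, t \in th -> exists m : int, t = m%:~R / (p ^ al)%:R) ->
  (exists k : nat, size A = (p ^ k)%N) /\ T1 A.
Proof.
move=> uA A0 N2 pp [sth uth th01 hsp] hth.
set N := size A in N2 sth hsp *; set Q := (p ^ al)%N in hth.
have p0 := prime_gt0 pp; have p1 := prime_gt1 pp.
have Q0 : (0 < Q)%N by rewrite expn_gt0 p0.
have QR0 : (Q%:R : R) != 0 by rewrite pnatr_eq0 -lt0n.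
set x := fun i => nth 0 (0 :: th) i.
have hn : forall i, (i < N)%N -> exists2 n, (n < Q)%N & x i = n%:R / Q%:R.
  case=> [|i] iN; first by exists 0%N => //; rewrite mul0r.
  have ti : x i.+1 \in th by apply: mem_nth; rewrite sth; lia.
  have [m hm] := hth _ ti; have /andP[t0 t1] := th01 _ ti.
  rewrite hm in t0 t1.
  have m0 : 0 < m.
    by move: t0; rewrite pmulr_lgt0 ?invr_gt0 ?ltr0n // ltr0z.
  have mQ : m < Q%:Z.
    move: t1; rewrite ltr_pdivrMr ?ltr0n // mul1r -[Q%:R]/((Q%:Z)%:~R : R) ltr_int //.
  exists `|m|%N.
    by rewrite -ltz_nat gtz0_abs.
  by rewrite hm -[`|m|%N%:R]/((`|m|%N%:Z)%:~R : R) gtz0_abs.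
set n := fun i => `|Num.floor (x i * Q%:R)|%N.
have hn' : forall i, (i < N)%N -> (n i < Q)%N /\ x i = (n i)%:R / Q%:R.
  move=> i iN; have [m mQ E] := hn i iN.
  rewrite /n E mulfVK // -[m%:R]/((m%:Z)%:~R : R) intrKfloor /=.
  by [].
have ux : uniq (0 :: th).
  rewrite /= uth andbT; apply/negP => /th01; by rewrite ltxx.
have nneq : forall i j, (i < N)%N -> (j < N)%N -> i != j -> n i != n j.
  move=> i j iN jN ij; apply/eqP => e.
  have : x i = x j by rewrite (hn' i iN).2 (hn' j jN).2 e.
  by move/eqP; rewrite /x nth_uniq //= ?sth; try lia; rewrite (negbTE ij).
set w := expi (Q%:R^-1 : R).
have pw : Q.-primitive_root w := expi_prim R Q0.
have K1 : forall i j, (i < N)%N -> (j < N)%N -> i != j ->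
    'Phi_(Q %/ gcdn (n i + Q - n j) Q) %| Apoly A.
  move=> i j iN jN ij.
  have [ni nx] := hn' i iN; have [nj ny] := hn' j jN.
  have e : expi (x i - x j) = w ^+ (n i + Q - n j).
    rewrite /w -expiMn.
    have -> : (Q%:R^-1 : R) *+ (n i + Q - n j) = (n i + Q - n j)%:R / Q%:R by rewrite mulr_natl.
    rewrite natrB; last by lia.
    rewrite natrD mulrBl mulrDl mulfV // -nx -ny.
    have -> : x i + 1 - x j = (x i - x j) + 1 by ring.
    by rewrite [RHS]expiD expi1 mulr1.
  apply: (Phi_dvd (exp_prim_root pw _)).
  by rewrite -e; apply/rootP; rewrite -Aeval_map; apply: hsp.
set T := [seq v <- iota 0 al | 'Phi_(p ^ (al - v)) %| Apoly A].
set dg := fun v m => ((m %/ p ^ v) %% p)%N.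
have K2 : forall i j, (i < N)%N -> (j < N)%N -> i != j ->
    exists2 v, v \in T & dg v (n i) != dg v (n j).
  move=> i j iN jN ij.
  have [v [vl oE dne]] := digits_core pp (hn' i iN).1 (hn' j jN).1 (nneq i j iN jN ij).
  exists v => //; rewrite mem_filter mem_iota /= vl andbT -oE.
  exact: K1.
have cardle : (N <= p ^ size T)%N.
  pose f := fun i : 'I_N => [ffun t : 'I_(size T) =>
     Ordinal (ltn_pmod (n i %/ p ^ nth 0%N T t) p0)].
  have finj : injective f.
    move=> i j e; case: (eqVneq (val i) (val j)) => [/val_inj //|ij]; exfalso.
    have [v vT dn] := K2 _ _ (ltn_ord i) (ltn_ord j) ij.
    have iv : (index v T < size T)%N by rewrite index_mem.
    move/ffunP: e => /(_ (Ordinal iv)); rewrite !ffunE => /(congr1 val) /=.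
    by rewrite nth_index // => h; move: dn; rewrite /dg h eqxx.
  by have := leq_card f finj; rewrite card_ord card_ffun !card_ord.
have A0' : (0 < N)%N by lia.
set B := (size (Apoly A)).*2.+1.
set S := [seq s <- iota 0 B | ppb s && ('Phi_s %| Apoly A)].
have memS : forall s, s \in S <-> in_SA A s.
  move=> s; rewrite mem_filter mem_iota /= add0n; split.
    by case/andP => /andP[/ppP ? ?] _; split.
  move=> h; have [pps dv] := h; rewrite (SA_bound A0' h) andbT dv andbT; exact/ppP.
have uS : uniq S by rewrite filter_uniq // iota_uniq.
have ppS : forall s, s \in S -> prime_power s := fun s h => ((memS s).1 h).1.
set P := (\prod_(s <- S) pdiv s)%N.
have PN : (P <= N)%N.
  have dv : \prod_(s <- S) 'Phi_s %| Apoly A.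
    apply: prod_Phi_dvd => // s sS; have [pps dv] := (memS s).1 sS; split => //.
    by have /ppP/andP[s1 _] := pps; apply: ltnW.
  have mon : \prod_(s <- S) 'Phi_s \is monic.
    by apply: monic_prod => s _; apply: Cyclotomic_monic.
  have /(Pdiv.IdomainMonic.dvdpP mon) [q qe] := dv.
  have := congr1 (horner^~ 1) qe; rewrite hornerM horner_prod prod_Phi_at1 // Apoly_at1.
  have P0 : (0 < P)%N by rewrite /P big_seq_cond prodn_cond_gt0 // => s _; apply: pdiv_gt0.
  move: (q.[1]) => c e.
  rewrite -/N -/P !natz in e.
  have c0 : 0 < c.
    by rewrite -(pmulr_lgt0 _ (_ : 0 < P%:Z)) -?e ?ltz_nat //; lia.
  have c1 : 1 <= c by lia.
  have : P%:Z <= N%:Z by rewrite e ler_peMl.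
  by rewrite lez_nat.
have Tlt : forall v, v \in T -> (v < al)%N.
  by move=> v; rewrite mem_filter mem_iota => /andP[_ /andP[_]].
have lowP : (p ^ size T <= P)%N.
  set L := [seq (p ^ (al - v))%N | v <- T].
  have uL : uniq L.
    rewrite map_inj_in_uniq ?filter_uniq ?iota_uniq //.
    move=> v v' vT v'T /(expnI p1) h.
    have := Tlt v vT; have := Tlt v' v'T; lia.
  have subL : {subset L <= S}.
    move=> s /mapP[v vT ->]; apply/memS; split.
      by exists p, (al - v)%N; split => //; have := Tlt v vT; lia.
    by move: vT; rewrite mem_filter => /andP[].
  have := @prod_sub_le S L (fun s => pdiv s) uS uL subL (fun s _ => pdiv_gt0 s).
  rewrite big_map.
  have -> : (\prod_(v <- T) pdiv (p ^ (al - v)) = \prod_(v <- T) p)%N.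
    apply: eq_big_seq => v vT.
    have [k ->] : exists k, (al - v = k.+1)%N by exists (al - v).-1; have := Tlt v vT; lia.
    exact: pdiv_pfactor.
  by rewrite prod_const_seq.
have NP : N = P by apply/eqP; rewrite eqn_leq PN andbT (leq_trans cardle lowP).
split; first by exists (size T); apply/eqP; rewrite eqn_leq cardle NP lowP.
exists S; split => //.
by rewrite Apoly_at1 prod_Phi_at1 // -/N NP.
Qed.


Lemma partI (R : realType) (A : seq nat) :
  uniq A -> (0 \in A)%N -> (2 <= size A)%N -> T1 A -> T2 A -> has_spectrum R A.
Proof.
move=> uA A0 N2 [S [uS memS e1]] hT2.
set N := size A in N2 *.
have hS : forall s, s \in S -> in_SA A s := fun s h => (memS s).1 h.
have ppS : forall s, s \in S -> prime_power s by move=> s /hS[].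
have S1 : forall s, s \in S -> (1 < s)%N by move=> s /ppS /ppP /andP[].
have NP : N = (\prod_(s <- S) pdiv s)%N.
  by move: e1; rewrite Apoly_at1 prod_Phi_at1 // => /eqP; rewrite eqr_nat => /eqP.
set M := (\prod_(s <- S) s)%N.
have M0 : (0 < M)%N.
  by rewrite /M big_seq_cond prodn_cond_gt0 // => s /andP[/S1 /ltnW].
have MR0 : (M%:R : R) != 0 by rewrite pnatr_eq0 -lt0n.
set C := Cen pdiv S.
set cf := fun (v : seq nat) s => nth 0%N v (index s S).
set a := fun v => (\sum_(s <- S) cf v s * (M %/ s))%N.
set th0 := fun v => ((a v %% M)%:R / M%:R : R).
have cfb : forall v, v \in C -> forall s, s \in S -> (cf v s < pdiv s)%N.
  move=> v vC s sS; have [_ h] := mem_Cen vC.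
  by have := h (index s S); rewrite index_mem sS nth_index //; apply.
set om := fun s : nat => expi (s%:R^-1 : R).
have expiT : forall v, expi (th0 v) = \prod_(s <- S) om s ^+ cf v s.
  move=> v; rewrite /th0.
  have e : (a v %% M)%:R / M%:R = (a v)%:R / M%:R - ((a v %/ M)%N%:R) :> R.
    by rewrite {2}(divn_eq (a v) M) natrD natrM mulrDl mulfK //; ring.
  rewrite e expiD expiN expi_nat invr1 mulr1.
  rewrite /a natr_sum mulr_suml expi_sum; apply: eq_big_seq => s sS.
  have s0 : (s%:R : R) != 0 by rewrite pnatr_eq0 -lt0n ltnW ?S1.
  rewrite natrM natf_div ?dvdn_prod_seq // /om -expiMn.
  have -> : (s%:R^-1 : R) *+ cf v s = (cf v s)%:R * s%:R^-1 by rewrite mulr_natl.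
  by congr expi; field; rewrite s0 MR0.
have pom : forall s, s \in S -> s.-primitive_root (om s).
  by move=> s sS; apply: expi_prim; apply: ltnW; apply: S1.
have Ew0 : forall w, \prod_(s <- S) om s ^+ cf w s != 0.
  move=> w; rewrite prodf_seq_neq0; apply/allP => s sS /=.
  by rewrite expf_neq0 // (prim_root_eq0 (pom s sS)) -lt0n ltnW ?S1.
have expiD2 : forall v w, v \in C -> w \in C ->
    expi (th0 v - th0 w) = \prod_(s <- S) om s ^+ (cf v s + s - cf w s).
  move=> v w vC wC; rewrite expiD expiN !expiT.
  apply: (canLR (mulfK (Ew0 w))).
  rewrite -big_split /=; apply: eq_big_seq => s sS.
  rewrite -exprD subnK; last by have := cfb w wC s sS; have := pdiv_leq (ltnW (S1 s sS)); lia.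
  by rewrite exprD (prim_expr_order (pom s sS)) mulr1.
have diffS : forall v w, v \in C -> w \in C -> v != w ->
    exists2 s, s \in S & cf v s != cf w s.
  move=> v w vC wC vw; have [sv _] := mem_Cen vC; have [sw _] := mem_Cen wC.
  case: (boolP [exists i : 'I_(size S), nth 0%N v i != nth 0%N w i]).
    move=> /existsP [i h]; exists (nth 0%N S i); first by rewrite mem_nth.
    by rewrite /cf index_uniq.
  move=> /existsPn h; exfalso; move/negP: vw; apply.
  apply/eqP/(eq_from_nth (x0 := 0%N)); first by rewrite sv sw.
  by move=> i; rewrite sv => iS; have := h (Ordinal iS); rewrite negbK => /eqP.
have key : forall v w, v \in C -> w \in C -> v != w -> exists n, [/\ (1 < n)%N,
    'Phi_n %| Apoly A & n.-primitive_root (expi (th0 v - th0 w))].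
  move=> v w vC wC vw; rewrite expiD2 //.
  apply: keyL3 => //; last exact: diffS.
  by move=> s sS; rewrite !cfb.
have inj : {in C &, injective th0}.
  move=> v w vC wC e; apply/eqP/negP => /negP vw.
  have [n [n1 _ pn]] := key v w vC wC vw.
  move: pn; rewrite e subrr expi0 => /prim_order_dvd /(_ 1%N); rewrite expr1 eqxx.
  by move/dvdn_leq => /(_ erefl); rewrite leqNgt n1.
have hC := head_Cen (q := pdiv) (fun s => pdiv_gt0 s) S.
rewrite -/C in hC.
have th00 : th0 (nseq (size S) 0%N) = 0.
  rewrite /th0 /a big1_seq ?mod0n ?mul0r // => s _.
  by rewrite /cf nth_nseq if_same mul0n.
have uC : uniq C := uniq_Cen pdiv S.
have sC : size C = N by rewrite size_Cen NP.
set th := map th0 (behead C).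
have thE : 0 :: th = map th0 C by rewrite [in RHS]hC /= th00.
have uth0 : uniq (0 :: th) by rewrite thE map_inj_in_uniq.
exists th; split.
- by rewrite size_map size_behead sC.
- by move: uth0 => /andP[].
- move=> t /mapP[v vC ->].
  have vC' : v \in C by rewrite hC inE vC orbT.
  have ne : v != nseq (size S) 0%N.
    by apply/eqP => e; move: uC; rewrite hC /= -e vC.
  have t0 : th0 v != 0.
    have nC : nseq (size S) 0%N \in C by rewrite hC inE eqxx.
    by rewrite -th00; apply: contra ne => /eqP /(inj _ _ vC' nC) ->.
  rewrite lt0r t0 /= /th0 divr_ge0 ?ler0n //= ltr_pdivrMr ?ltr0n // mul1r ltr_nat ltn_pmod //.
- move=> i j iN jN ij.
  rewrite thE !(nth_map [::]) ?sC //.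
  have iC : nth [::] C i \in C by rewrite mem_nth ?sC.
  have jC : nth [::] C j \in C by rewrite mem_nth ?sC.
  have ne : nth [::] C i != nth [::] C j by rewrite nth_uniq ?sC.
  have [n [_ dv pn]] := key _ _ iC jC ne.
  have /(Pdiv.IdomainMonic.dvdpP (Cyclotomic_monic n)) [qq qe] := dv.
  rewrite Aeval_map qe rmorphM hornerM /=.
  by rewrite (eqP (Phi_root pn)) mulr0.
Qed.


Unset Implicit Arguments. Set Strict Implicit. Set Printing Implicit Defensive.

Theorem mainTheorem1 (R : realType) (A : seq nat) :
  uniq A -> (0 \in A)%N -> (2 <= size A)%N ->
  (T1 A -> T2 A -> has_spectrum R A) /\
  (forall (p alpha : nat) (th : seq R),
     prime p -> is_spectrum A th ->
     (forall t, t \in th -> exists m : int, t = m%:~R / (p ^ alpha)%:R) ->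
     (exists k : nat, size A = (p ^ k)%N) /\ T1 A).
Proof.
move=> uA A0 N2; split; first exact: partI.
move=> p al th pp sp hth; exact: (partII uA A0 N2 pp sp hth).
Qed.
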